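(* Let $p$ be a prime, $m,n\ge0$ integers and $a,b,c,d\ge0$ integers (assumed positive if $p=2$). (1) If $p^m\frac{p^a+1}{p^b+1}=p^n\frac{p^c+1}{p^d+1}\in\mathbb Z_{>0}$, then $m=n$ and either ($a=b$ and $c=d$) or ($a=c$ and $b=d$). (2) If $p^m\frac{p^a-1}{p^b+1}=p^n\frac{p^c-1}{p^d+1}\in\mathbb Z_{>0}$, then $m=n$, $a=c$ and $b=d$. (3) If $p^m\frac{p^a+1}{p^b+1}=p^n\frac{p^c-1}{p^d+1}\in\mathbb Z_{>0}$, then $m=n$ and either $p=2$ and ($a=b$, $c=2$, $d=1$, or $(a,b,c,d)=(3,1,4,2)$), or $p=3$ and ($a=b$, $c=1$, $d=0$, or $(a,b,c,d)=(1,0,2,1)$). (4) If $p^m(p^a+1)=p^n\frac{p^c+1}{p^d+1}\in\mathbb Z_{>0}$, then $m=n$ and either $p=3$ and $(a,c,d)=(0,1,0)$, or $p=2$ and $(a,c,d)=(1,3,1)$. (5) If $p^m(p^a+1)=p^n\frac{p^c-1}{p^d+1}\in\mathbb Z_{>0}$, then $m=n$ and either $p=5$ and $(a,c,d)=(0,1,0)$, or $p=3$ and $(a,c,d)\in\{(0,2,1),(1,2,0)\}$, or $p=2$ and $(a,c,d)\in\{(1,4,2),(2,4,1)\}$. *)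

(* Defs.v *)
From mathcomp Require Import all_boot all_algebra.
Set Implicit Arguments. Unset Strict Implicit. Unset Printing Implicit Defensive.
Import GRing.Theory Num.Theory.
Local Open Scope ring_scope.

Definition posint (x : rat) : Prop := exists k : nat, (0 < k)%N /\ x = k%:R.

Definition exps_ok (p : nat) (l : seq nat) : Prop :=
  p = 2%N -> all (fun e => (0 < e)%N) l.

Definition pw (p e : nat) : rat := (p%:R) ^+ e.

(* Main.v *)
Require Import Defs.
From mathcomp Require Import all_boot all_algebra.
From mathcomp Require Import zify ring.
Import GRing.Theory Num.Theory.
Set Implicit Arguments. Unset Strict Implicit.

Lemma pgt1 p : prime p -> 1 < p.
Proof. exact: prime_gt1. Qed.

Lemma ppos p e : 1 < p -> 0 < p ^ e.
Proof. by move=> h; rewrite expn_gt0; apply/orP; left; lia. Qed.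

Lemma dvd_pw p e : 0 < e -> p %| p ^ e.
Proof. by move=> h; apply: dvdn_exp. Qed.

Lemma pwS p e : 0 < e -> p ^ e = p * p ^ e.-1.
Proof. by case: e => // e _; rewrite expnS. Qed.

Lemma pw_split p e f : f <= e -> p ^ e = p ^ f * p ^ (e - f).
Proof. by move=> h; rewrite -expnD subnKC. Qed.

Lemma pw_inj p x y : 1 < p -> p ^ x = p ^ y -> x = y.
Proof. by move=> h /eqP; rewrite eqn_exp2l // => /eqP. Qed.

Lemma pw_lt p x y : 1 < p -> p ^ x < p ^ y -> x < y.
Proof. by move=> h; rewrite ltn_exp2l. Qed.

Lemma pw_le p x y : 1 < p -> p ^ x <= p ^ y -> x <= y.
Proof. by move=> h; rewrite leq_exp2l. Qed.

Lemma pw_ge p e : 1 < p -> 0 < e -> p <= p ^ e.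
Proof. move=> h he; rewrite -{1}(expn1 p) leq_exp2l //. Qed.

Lemma ndvd1 p : 1 < p -> ~~ (p %| 1).
Proof. by move=> h; rewrite dvdn1; apply/eqP; lia. Qed.

Lemma vuniq p x y u v : 1 < p -> p ^ x * u = p ^ y * v ->
  ~~ (p %| u) -> ~~ (p %| v) -> x = y /\ u = v.
Proof.
move=> hp.
wlog hxy : x y u v / x <= y.
  move=> W E hu hv; case: (leqP x y) => h; first exact: W.
  have [-> ->] := W y x v u (ltnW h) (esym E) hv hu; done.
move=> E hu hv.
rewrite (pw_split p hxy) -mulnA in E.
have E2 : u = p ^ (y - x) * v.
  by apply/eqP; rewrite -(eqn_pmul2l (ppos x hp)) E.
case H: (y - x) => [|k].
  by rewrite H expn0 mul1n in E2; split => //; lia.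
exfalso; move/negP: hu; apply; rewrite E2 H; apply: dvdn_mulr; exact: dvd_pw.
Qed.

Lemma vuniq1 p x y u : 1 < p -> p ^ x * u = p ^ y ->
  ~~ (p %| u) -> x = y /\ u = 1.
Proof. by move=> hp E hu; apply: (vuniq hp _ hu (ndvd1 hp)); rewrite muln1. Qed.

Lemma prime_small p n : prime p -> p %| n -> 0 < n -> n <= 5 ->
  (n = 2 -> p = 2) /\ (n = 3 -> p = 3) /\ (n = 5 -> p = 5) /\ (n <> 1) /\ (n = 4 -> p = 2).
Proof.
move=> hp hd hn hn5; have := dvdn_leq hn hd.
have := pgt1 hp.
case: n hd hn hn5 => [|[|[|[|[|[|]]]]]] // hd _ _;
case: p hp hd => [|[|[|[|[|[|]]]]]] //.
Qed.

Lemma dvdP2 p : prime p -> p %| 2 -> p = 2.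
Proof. by move=> hp hd; case: (prime_small hp hd) => // ->. Qed.
Lemma dvdP3 p : prime p -> p %| 3 -> p = 3.
Proof. by move=> hp hd; case: (prime_small hp hd) => // _ [->]. Qed.
Lemma dvdP5 p : prime p -> p %| 5 -> p = 5.
Proof. by move=> hp hd; case: (prime_small hp hd) => // _ [_ [->]]. Qed.

Lemma cop_plus p e : prime p -> (p = 2 -> 0 < e) -> ~~ (p %| p ^ e + 1).
Proof.
move=> hp h; have p1 := pgt1 hp.
case: e h => [|e] h.
  rewrite expn0; apply/negP => /(dvdP2 hp) /h //.
by rewrite dvdn_addr ?ndvd1 ?dvd_pw.
Qed.

Lemma cop_minus p e : 1 < p -> 0 < e -> ~~ (p %| p ^ e - 1).
Proof.
move=> p1 he; apply/negP => H.
have : p %| (p ^ e - 1) + 1 by rewrite subnK ?ppos ?dvd_pw.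
by rewrite dvdn_addr // (negPf (ndvd1 p1)).
Qed.

Lemma intg p m A B k : prime p -> ~~ (p %| B) -> p ^ m * A = k * B -> B %| A.
Proof.
move=> hp hB E.
have cB : coprime B (p ^ m) by apply: coprimeXr; rewrite coprime_sym prime_coprime.
by rewrite -(Gauss_dvdl _ cB) mulnC E dvdn_mull.
Qed.

Lemma nd2 p x y : prime p -> ~~ (p %| x) -> ~~ (p %| y) -> ~~ (p %| x * y).
Proof. by move=> hp hx hy; rewrite Euclid_dvdM // negb_or hx hy. Qed.

Lemma nd_add1 p x : 1 < p -> p %| x -> ~~ (p %| x + 1).
Proof. by move=> h hx; rewrite dvdn_addr // ndvd1. Qed.

Lemma pw0 p c : 1 < p -> 1 < p ^ c -> 0 < c.
Proof. by case: c => // ; rewrite expn0. Qed.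

Lemma pw_dvd_val p c n : 1 < p -> p ^ c = n -> 1 < n -> p %| n.
Proof. by move=> p1 E hn; rewrite -E; apply: dvd_pw; apply: (pw0 p1); rewrite E. Qed.

Lemma K1 p x y z w : prime p -> x <= y -> x < z -> x < w ->
  (p ^ x + 1) * (p ^ y + 1) <> (p ^ z + 1) * (p ^ w + 1).
Proof.
move=> hp hxy hxz hxw E; have p1 := pgt1 hp.
have Lz := ltn_exp2l x z p1; have Lw := ltn_exp2l x w p1.
case: (ltnP x y) => hy; last first.
  have hyx : y = x by lia.
  move: E; rewrite hyx; apply/eqP; rewrite neq_ltn; apply/orP; left.
  by apply: ltn_mul; rewrite ltn_add2r ?Lz ?Lw.
have u0 := ppos x p1.
rewrite (pw_split p (ltnW hy)) (pw_split p (ltnW hxz)) (pw_split p (ltnW hxw)) in E.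
set u := p ^ x in E u0; set X := p ^ (y - x) in E; set Y := p ^ (z - x) in E;
  set Z := p ^ (w - x) in E.
have E2 : u * (u * X + X + 1) + 1 = u * (u * Y * Z + Y + Z) + 1.
  transitivity ((u + 1) * (u * X + 1)); first ring.
  rewrite E; ring.
have E3 : u * X + X + 1 = u * Y * Z + Y + Z.
  by apply/eqP; rewrite -(eqn_pmul2l u0); apply/eqP; lia.
have dX : p %| X by apply: dvd_pw; lia.
have dY : p %| Y by apply: dvd_pw; lia.
have dZ : p %| Z by apply: dvd_pw; lia.
have : p %| u * Y * Z + Y + Z.
  by apply: dvdn_add => //; apply: dvdn_add => //; apply: dvdn_mulr; exact: dvdn_mull.
rewrite -E3 -addnA dvdn_addr ?dvdn_mull // dvdn_addr //.
by rewrite (negPf (ndvd1 p1)).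
Qed.

Lemma K2 p x y z w : prime p -> (p ^ x + 1) * (p ^ y + 1) = (p ^ z + 1) * (p ^ w + 1) ->
  x <> z -> x <> w -> y <> z -> y <> w -> False.
Proof.
move=> hp.
wlog hxy : x y / x <= y.
  move=> W E h1 h2 h3 h4; case: (leqP x y) => h; first exact: W E h1 h2 h3 h4.
  by apply: (W y x) => //; [apply: ltnW | rewrite mulnC].
wlog hzw : z w / z <= w.
  move=> W E h1 h2 h3 h4; case: (leqP z w) => h; first exact: W E h1 h2 h3 h4.
  by apply: (W w z) => //; [apply: ltnW | rewrite [RHS]mulnC].
wlog hxz : x y z w hxy hzw / x <= z.
  move=> W E h1 h2 h3 h4; case: (leqP x z) => h; first exact: W E h1 h2 h3 h4.
  by apply: (W z w x y hzw hxy (ltnW h) (esym E)); lia.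
move=> E h1 h2 h3 h4.
by apply: (K1 hp hxy _ _ E); lia.
Qed.

Lemma core1 p a b c d : prime p -> (p ^ a+1)*(p ^ d+1) = (p ^ c+1)*(p ^ b+1) ->
  (a = b /\ c = d) \/ (a = c /\ b = d).
Proof.
move=> hp E; have p1 := pgt1 hp.
have canc : forall x y z, (p ^ x + 1) * (p ^ y + 1) = (p ^ x + 1) * (p ^ z + 1) -> y = z.
  move=> x y z /eqP; rewrite eqn_pmul2l; last by rewrite addn1.
  by rewrite eqn_add2r => /eqP; apply: pw_inj.
case: (eqVneq a b) => hab.
  left; split => //; subst b; apply: esym; apply: (canc a); rewrite E mulnC //.
case: (eqVneq a c) => hac.
  right; split => //; subst c; apply: (canc a); rewrite E mulnC //.
case: (eqVneq d b) => hdb.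
  right; split => //; subst d; apply: (canc b); rewrite mulnC E mulnC //.
case: (eqVneq d c) => hdc.
  left; split => //; subst d; apply: (canc c); rewrite mulnC E //.
exfalso; apply: (K2 hp E); apply/eqP => //.
Qed.

Lemma core2 p a b c d q : prime p -> 0 < a -> q*(p ^ b+1)+1 = p ^ a ->
  q*(p ^ d+1)+1 = p ^ c -> a = c /\ b = d.
Proof.
move=> hp ha E1 E2; have p1 := pgt1 hp.
have q0 : 0 < q.
  case: q E1 E2 => // E1 _; rewrite mul0n add0n in E1.
  have := pw_ge p1 ha; lia.
have hc : 0 < c.
  case: c E2 => // E2; rewrite expn0 in E2; nia.
wlog hbd : a b c d ha hc E1 E2 / b <= d.
  move=> W; case: (leqP b d) => h; first exact: W.
  by have [-> ->] := W c d a b hc ha E2 E1 (ltnW h).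
case: (ltnP b d) => hbd'; last first.
  have -> : d = b by lia.
  split => //; apply: (pw_inj p1); rewrite -E1 -E2; congr (_ + _).
  by have -> : d = b by lia.
have pA := ppos a p1; have pB := ppos b p1.
rewrite (pw_split p (ltnW hbd')) in E2.
have pw1 : p <= p ^ (d - b) by apply: pw_ge; lia.
have Lac : p ^ a < p ^ c.
  rewrite -E1 -E2; have : q * p ^ b * 1 < q * p ^ b * p ^ (d - b).
    by rewrite ltn_pmul2l ?muln_gt0 ?q0 //; lia.
  lia.
have hac := pw_lt p1 Lac.
rewrite (pw_split p (ltnW hac)) in E2.
have pt : p <= p ^ (c - a) by apply: pw_ge; lia.
have E3 : p ^ b * (q * (p ^ (d - b) - 1)) = p ^ a * (p ^ (c - a) - 1).
  move: E1 E2 pw1 pt.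
  set A := p ^ a; set B := p ^ b; set w := p ^ (d - b); set t := p ^ (c - a).
  case: w => [|w']; first lia. case: t => [|t']; first lia.
  rewrite !subn1 /=. move=> E1 E2 _ _. lia.
have nq : ~~ (p %| q).
  apply/negP => dq; move: (dvd_pw p ha); rewrite -E1 dvdn_addr.
    by rewrite (negPf (ndvd1 p1)).
  exact: dvdn_mulr.
have n1 : ~~ (p %| p ^ (d - b) - 1) by apply: cop_minus; lia.
have n2 : ~~ (p %| p ^ (c - a) - 1) by apply: cop_minus; lia.
have [hba _] := vuniq p1 E3 (nd2 hp nq n1) n2.
move: E1; rewrite hba; have : p ^ a <= q * p ^ a by rewrite leq_pmull.
lia.
Qed.

Lemma L3q1 p a b c d : prime p -> (p = 2 -> 0 < d) ->
  p ^ b + 1 = p ^ a + 1 -> p ^ d + 1 + 1 = p ^ c ->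
     ((p = 2%N /\ ((a = b /\ c = 2%N /\ d = 1%N) \/ (a, b, c, d) = (3, 1, 4, 2)%N)) \/
      (p = 3%N /\ ((a = b /\ c = 1%N /\ d = 0%N) \/ (a, b, c, d) = (1, 0, 2, 1)%N))).
Proof.
move=> hp okd E1 E2; have p1 := pgt1 hp.
have hab : a = b by apply: (pw_inj p1); lia.
have hc : 0 < c by apply: (pw0 p1); rewrite -E2; lia.
case: d okd E2 => [|d] okd E2.
  rewrite expn0 in E2.
  have h3 := dvdP3 hp (pw_dvd_val p1 (esym E2) isT); subst p.
  have : c = 1 by apply: (pw_inj (p:=3)) => //; rewrite -E2.
  by move=> ->; right; split => //; left.
have h2 : p %| 2.
  by move: (dvd_pw p hc); rewrite -E2 -addnA dvdn_addr // dvd_pw.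
have := dvdP2 hp h2 => hp2; subst p.
case: d okd E2 => [|d] _ E2.
  have : c = 2 by apply: (pw_inj (p:=2)) => //; rewrite -E2.
  by move=> ->; left; split => //; left.
exfalso.
have E3 : 2 ^ 1 * (2 ^ d.+1 + 1) = 2 ^ c by rewrite -E2 !expnS; ring.
have := vuniq1 p1 E3 (nd_add1 p1 (dvd_pw 2 (ltn0Sn _))); case => _.
have := ppos d.+1 p1; lia.
Qed.

Lemma L3b0 p a c d q : prime p -> p <> 2 -> 2 <= q ->
  q * (p ^ 0 + 1) = p ^ a + 1 -> q * (p ^ d + 1) + 1 = p ^ c ->
  p = 3 /\ (a, c, d) = (1, 2, 1).
Proof.
move=> hp hp2 hq E1 E2; have p1 := pgt1 hp.
rewrite expn0 in E1.
case: a E1 => [|a] E1; first by rewrite expn0 in E1; lia.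
have hc : 0 < c by apply: (pw0 p1); rewrite -E2; have := ppos d p1; nia.
case: d E2 => [|d] E2.
  exfalso; rewrite expn0 in E2.
  have Ec : p ^ c = p ^ a.+1 + 2 by lia.
  by apply: hp2; apply: dvdP2 => //; move: (dvd_pw p hc); rewrite Ec dvdn_addr // dvd_pw.
have hq1 : p %| q + 1.
  have Ec : p ^ c = q * p ^ d.+1 + (q + 1) by rewrite -E2; ring.
  by move: (dvd_pw p hc); rewrite Ec dvdn_addr // dvdn_mull // dvd_pw.
have h3 : p %| 3.
  have Ea : 2 * (q + 1) = p ^ a.+1 + 3 by lia.
  by move: (dvdn_mull 2 hq1); rewrite Ea dvdn_addr // dvd_pw.
have := dvdP3 hp h3 => hp3; subst p.
have E3 : 2 * 3 ^ c = (3 ^ a.+1 + 1) * (3 ^ d.+1 + 1) + 2 by rewrite -E2 -E1; ring.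
case: a E1 E3 => [|a] E1 E3; case: d E2 E3 => [|d] E2 E3.
- have : c = 2 by apply: (pw_inj (p:=3)) => //; move: E3; rewrite /=; lia.
  by move=> ->.
- exfalso.
  have E4 : 3 ^ 1 * (3 ^ d.+1 * 2 + 1) = 3 ^ c by move: E3; rewrite !expnS /=; lia.
  have := vuniq1 p1 E4 (nd_add1 p1 (dvdn_mulr _ (dvd_pw 3 (ltn0Sn _)))); case => _.
  have := ppos d.+1 p1; lia.
- exfalso.
  have E4 : 3 ^ 1 * (3 ^ a.+1 * 2 + 1) = 3 ^ c by move: E3; rewrite !expnS /=; lia.
  have := vuniq1 p1 E4 (nd_add1 p1 (dvdn_mulr _ (dvd_pw 3 (ltn0Sn _)))); case => _.
  have := ppos a.+1 p1; lia.
- exfalso.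
  have E4 : 3 ^ 1 * ((3 * 3 ^ a.+1 * 3 ^ d.+1 + 3 ^ a.+1 + 3 ^ d.+1) + 1) = 3 ^ c * 2.
    by rewrite [3 ^ c * 2]mulnC E3 !expnS; ring.
  have hx : 3 %| 3 * 3 ^ a.+1 * 3 ^ d.+1 + 3 ^ a.+1 + 3 ^ d.+1.
    by apply: dvdn_add; [apply: dvdn_add|]; [apply: dvdn_mulr; apply: dvdn_mulr; exact: dvdnn | exact: dvd_pw | exact: dvd_pw].
  have := vuniq p1 E4 (nd_add1 p1 hx) isT; case => _.
  have := ppos a.+1 p1; have := ppos d.+1 p1; lia.
Qed.

Lemma L3p3 a b c q : 0 < b -> 2 <= q ->
  q * (3 ^ b + 1) = 3 ^ a + 1 -> q * (3 ^ 0 + 1) + 1 = 3 ^ c -> False.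
Proof.
move=> hb hq E1 E2; have p1 : 1 < 3 by [].
rewrite expn0 in E2.
have hab : b <= a.
  apply: (pw_le p1); have : 3 ^ b + 1 <= q * (3 ^ b + 1) by rewrite leq_pmull; lia.
  lia.
case: b hb hab E1 => // b _ hab E1.
case: a hab E1 => // a hab E1.
have E3 : 3 ^ c * (3 ^ b.+1 + 1) = 3 ^ 1 * (2 * 3 ^ a + 3 ^ b + 1).
  rewrite -E2; move: E1; rewrite !expnS; lia.
have nd : ~~ (3 %| 2 * 3 ^ a + 3 ^ b + 1).
  clear E1 E2 E3; case: b hab => [|b] hab.
    case: a {hab} => [|a] //.
    by rewrite expn0 -addnA dvdn_addr //; apply: dvdn_mull; exact: dvd_pw.
  apply: nd_add1 => //; apply: dvdn_add; last by apply: dvd_pw.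
  by apply: dvdn_mull; apply: dvd_pw; lia.
have [hc _] := vuniq p1 E3 (cop_plus (p:=3) isT (fun _ => ltn0Sn _)) nd.
by move: E2; rewrite hc; lia.
Qed.

Lemma L3p2 a b c d q : 0 < b -> 0 < d -> 2 <= q ->
  q * (2 ^ b + 1) = 2 ^ a + 1 -> q * (2 ^ d + 1) + 1 = 2 ^ c ->
  (a, b, c, d) = (3, 1, 4, 2).
Proof.
move=> hb hd hq E1 E2; have p1 : 1 < 2 by [].
have hab : b < a.
  apply: (pw_lt p1); have : 2 * (2 ^ b + 1) <= q * (2 ^ b + 1) by rewrite leq_mul2r hq orbT.
  lia.
have hc : 1 < c.
  apply: (pw_lt p1).
  by rewrite -E2 expn1 addn1 ltnS (leq_trans hq) // leq_pmulr // addn1.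
case: b hb hab E1 => // [[|b]] _ hab E1.
- (* b = 1 *)
  have E3 : 3 * 2 ^ c = (2 ^ a + 1) * (2 ^ d + 1) + 3 by rewrite -E2 -E1; ring.
  case: a hab E1 E3 => [|[|[|a]]] // hab E1 E3.
  + (* a = 2 *) by move: E1; rewrite /=; lia.
  case: d hd E2 E3 => [|[|[|d]]] // _ E2 E3.
  + (* d = 1 *)
    exfalso.
    have E4 : 2 ^ 1 * (2 ^ a.+2 + 1) = 2 ^ c by move: E3; rewrite !expnS /=; lia.
    have := vuniq1 p1 E4 (nd_add1 p1 (dvd_pw 2 (ltn0Sn _))); case => _.
    have := ppos a.+2 p1; lia.
  + (* d = 2 *)
    case: a hab E1 E3 => [|a] hab E1 E3.
      have : c = 4 by apply: (pw_inj (p:=2)) => //; move: E3 => /=; lia.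
      by move=> ->.
    exfalso.
    have E4 : 2 ^ 3 * (2 ^ a * 10 + 1) = 2 ^ c * 3 by move: E3; rewrite !expnS /=; lia.
    have := vuniq p1 E4 (nd_add1 p1 (dvdn_mull _ (isT : 2 %| 10))) isT; case => _.
    have := ppos a p1; lia.
  + (* d >= 3 *)
    exfalso.
    have E4 : 2 ^ 2 * (16 * 2 ^ a * 2 ^ d + 2 * 2 ^ a + 2 * 2 ^ d + 1) = 2 ^ c * 3.
      by rewrite [2 ^ c * 3]mulnC E3 !expnS; ring.
    have hx : 2 %| 16 * 2 ^ a * 2 ^ d + 2 * 2 ^ a + 2 * 2 ^ d.
      by apply: dvdn_add; [apply: dvdn_add|]; [apply: dvdn_mulr; apply: dvdn_mulr|apply: dvdn_mulr|apply: dvdn_mulr].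
    have := vuniq p1 E4 (nd_add1 p1 hx) isT; case => _.
    have := ppos a p1; have := ppos d p1; lia.
- (* b >= 2 *)
  case: a hab E1 => [|[|a]] // hab E1.
  case: d hd E2 => [|[|d]] // _ E2.
  + (* d = 1 *)
    exfalso.
    have E4 : 2 ^ c * (2 ^ b.+2 + 1) = 3 * (2 ^ a.+2 + 1) + 2 ^ b.+2 + 1.
      by rewrite -E2 -E1; ring.
    case: b hab E1 E4 => [|b] hab E1 E4.
    * case: a hab E1 E4 => [|[|a]] // hab E1 E4.
      -- have E5 : 2 ^ c * 5 = 2 ^ 5 * 1 by move: E4 => /=; lia.
         by have := vuniq p1 E5 isT isT; case.
      -- have E5 : 2 ^ c * 5 = 2 ^ 3 * (2 ^ a * 6 + 1) by move: E4; rewrite !expnS /=; lia.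
         have := vuniq p1 E5 isT (nd_add1 p1 (dvdn_mull _ (isT : 2 %| 6))); case => _.
         have := ppos a p1; lia.
    * case: a hab E1 E4 => [|a] // hab E1 E4.
      have E5 : 2 ^ c * (2 ^ b.+3 + 1) = 2 ^ 2 * (2 ^ a * 6 + 2 ^ b * 2 + 1).
        by rewrite E4 !expnS; ring.
      have hx : 2 %| 2 ^ a * 6 + 2 ^ b * 2.
        by apply: dvdn_add; apply: dvdn_mull.
      have := vuniq p1 E5 (cop_plus (p:=2) isT (fun _ => ltn0Sn _)) (nd_add1 p1 hx).
      case=> hc2 E6; subst c.
      have : 2 ^ a = 2 ^ b by move: E6; rewrite !expnS /=; lia.
      by move/(pw_inj p1) => hab'; subst a; lia.
  + (* d >= 2 *)
    exfalso.
    case: c hc E2 => [|[|c]] // _ E2.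
    move: E1 E2; rewrite !(expnS 2 b.+1) !(expnS 2 b) !(expnS 2 a.+1) !(expnS 2 a)
      !(expnS 2 d.+1) !(expnS 2 d) !(expnS 2 c.+1) !(expnS 2 c).
    lia.
Qed.

Lemma core3 p a b c d q : prime p -> (p = 2 -> [/\ 0<a, 0<b, 0<c & 0<d]) ->
  q*(p ^ b+1) = p ^ a+1 -> q*(p ^ d+1)+1 = p ^ c ->
     ((p = 2%N /\ ((a = b /\ c = 2%N /\ d = 1%N) \/ (a, b, c, d) = (3, 1, 4, 2)%N)) \/
      (p = 3%N /\ ((a = b /\ c = 1%N /\ d = 0%N) \/ (a, b, c, d) = (1, 0, 2, 1)%N))).
Proof.
move=> hp ok E1 E2; have p1 := pgt1 hp.
case: q E1 E2 => [|[|q]] E1 E2.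
- by rewrite mul0n addn1 in E1.
- rewrite !mul1n in E1 E2; apply: L3q1 E1 E2 => //.
  by move=> /ok [].
have hq : 2 <= q.+2 by [].
have hc : 0 < c by apply: (pw0 p1); rewrite -E2; lia.
case: b ok E1 => [|b] ok E1.
  have hp2 : p <> 2 by move=> /ok [].
  have [h3 h] := L3b0 hp hp2 hq E1 E2.
  by right; split => //; right; case: h => -> -> ->.
have pB := pw_ge p1 (ltn0Sn b).
case: a ok E1 => [|a] ok E1.
  by exfalso; move: E1; rewrite expn0; nia.
set Q := q.+2 in E1 E2 hq.
case: d ok E2 => [|d] ok E2.
  exfalso.
  have hd : p %| Q * 2 + 1 by rewrite expn0 in E2; rewrite E2; apply: dvd_pw.
  have E3 : (2 * Q) * p ^ b.+1 + (Q * 2 + 1) = 2 * p ^ a.+1 + 3.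
    by move: E1; lia.
  have h3 : p %| 3.
    have : p %| (2 * Q) * p ^ b.+1 + (Q * 2 + 1).
      by apply: dvdn_add => //; apply: dvdn_mull; exact: dvd_pw.
    by rewrite E3 dvdn_addr //; apply: dvdn_mull; exact: dvd_pw.
  have := dvdP3 hp h3 => hp3; subst p.
  exact: (L3p3 (ltn0Sn b) hq E1 E2).
have hq1 : p %| Q + 1.
  have Ec : p ^ c = Q * p ^ d.+1 + (Q + 1) by rewrite -E2; ring.
  by move: (dvd_pw p hc); rewrite Ec dvdn_addr // dvdn_mull // dvd_pw.
have h2 : p %| 2.
  have E3 : Q * p ^ b.+1 + (Q + 1) = p ^ a.+1 + 2 by move: E1; lia.
  have : p %| Q * p ^ b.+1 + (Q + 1).
    by apply: dvdn_add => //; apply: dvdn_mull; exact: dvd_pw.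
  by rewrite E3 dvdn_addr //; exact: dvd_pw.
have := dvdP2 hp h2 => hp2; subst p.
have := L3p2 (ltn0Sn b) (ltn0Sn d) hq E1 E2.
by case=> -> -> -> ->; left; split => //; right.
Qed.

Lemma core4 p a c d : prime p -> (p = 2 -> [/\ 0<a, 0<c & 0<d]) ->
  (p ^ a+1)*(p ^ d+1) = p ^ c+1 ->
     ((p = 3%N /\ (a, c, d) = (0, 1, 0)%N) \/ (p = 2%N /\ (a, c, d) = (1, 3, 1)%N)).
Proof.
move=> hp ok E; have p1 := pgt1 hp.
have {E} E : p ^ a * p ^ d + p ^ a + p ^ d = p ^ c.
  apply/eqP; rewrite -(eqn_add2r 1) -E; apply/eqP; ring.
wlog had : a d ok E / a <= d.
  move=> W; case: (leqP a d) => h; first exact: W.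
  have := W d a _ _ (ltnW h); case.
  - by move=> /ok [] *; split.
  - by rewrite -E; ring.
  - by case=> -> [-> -> ->]; left.
  - by case=> -> [-> -> ->]; right.
have pA := ppos a p1; have pD := ppos d p1.
case: a ok E had pA => [|a] ok E had pA.
  rewrite expn0 mul1n in E.
  case: d ok E had pD => [|d] ok E _ _.
    rewrite expn0 in E.
    have h3 := dvdP3 hp (pw_dvd_val p1 (esym E) isT); subst p.
    have : c = 1 by apply: (pw_inj (p:=3)) => //; rewrite -E.
    by move=> ->; left.
  exfalso; have hc : 0 < c by apply: (pw0 p1); rewrite -E; lia.
  have Ed : p ^ c = (p ^ d.+1 + p ^ d.+1) + 1 by rewrite -E; ring.
  have hx : p %| p ^ d.+1 + p ^ d.+1 by apply: dvdn_add; apply: dvd_pw.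
  by move: (nd_add1 p1 hx); rewrite -Ed (dvd_pw p hc).
case: (ltnP a.+1 d) => hd.
  exfalso.
  rewrite (pw_split p (ltnW hd)) in E.
  have E2 : p ^ a.+1 * (p ^ d + p ^ (d - a.+1) + 1) = p ^ c.
    by rewrite -E (pw_split p (ltnW hd)); ring.
  have := vuniq1 p1 E2 (nd_add1 p1 _); case.
    by apply: dvdn_add; apply: dvd_pw; lia.
  by move=> _; lia.
have {hd had} hd : d = a.+1 by lia.
subst d.
have E2 : p ^ a.+1 * (p ^ a.+1 + 2) = p ^ c by rewrite -E; ring.
case: (boolP (p %| p ^ a.+1 + 2)) => h2.
  have h22 : p %| 2 by move: h2; rewrite dvdn_addr // dvd_pw.
  have := dvdP2 hp h22 => hp2; subst p.
  case: a ok E E2 h2 pA pD => [|a] _ E E2 _ _ _.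
    have : c = 3 by apply: (pw_inj (p:=2)) => //; rewrite -E.
    by move=> ->; right.
  exfalso.
  have E3 : 2 ^ a.+3 * (2 ^ a.+1 + 1) = 2 ^ c by rewrite -E2 !expnS; ring.
  have := vuniq1 p1 E3 (nd_add1 p1 (dvd_pw 2 (ltn0Sn _))); case => _.
  have := ppos a.+1 p1; lia.
exfalso; have := vuniq1 p1 E2 h2; case => _; lia.
Qed.

Lemma core5 p a c d : prime p -> (p = 2 -> [/\ 0<a, 0<c & 0<d]) ->
  (p ^ a+1)*(p ^ d+1)+1 = p ^ c ->
     ((p = 5%N /\ (a, c, d) = (0, 1, 0)%N) \/
      (p = 3%N /\ ((a, c, d) = (0, 2, 1)%N \/ (a, c, d) = (1, 2, 0)%N)) \/
      (p = 2%N /\ ((a, c, d) = (1, 4, 2)%N \/ (a, c, d) = (2, 4, 1)%N))).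
Proof.
move=> hp ok E; have p1 := pgt1 hp.
have {E} E : p ^ a * p ^ d + p ^ a + p ^ d + 2 = p ^ c.
  by rewrite -E; ring.
wlog had : a d ok E / a <= d.
  move=> W; case: (leqP a d) => h; first exact: W.
  have := W d a _ _ (ltnW h); case.
  - by move=> /ok [] *; split.
  - by rewrite -E; ring.
  - by case=> -> [-> -> ->]; left.
  - by case=> [[-> [E1|E1]]|[-> [E1|E1]]]; case: E1 => -> -> ->; auto 6.
have pA := ppos a p1; have pD := ppos d p1.
have hc : 0 < c by apply: (pw0 p1); rewrite -E; lia.
have dc := dvd_pw p hc.
case: a ok E had pA => [|a] ok E had pA.
  rewrite expn0 mul1n in E.
  case: d ok E had pD => [|d] ok E _ _.
    rewrite expn0 in E.
    have h5 := dvdP5 hp (pw_dvd_val p1 (esym E) isT); subst p.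
    have : c = 1 by apply: (pw_inj (p:=5)) => //; rewrite -E.
    by move=> ->; left.
  have Ed : p ^ c = (p ^ d.+1 + p ^ d.+1) + 3 by rewrite -E; ring.
  have hx : p %| p ^ d.+1 + p ^ d.+1 by apply: dvdn_add; apply: dvd_pw.
  have h3 : p %| 3 by move: dc; rewrite Ed dvdn_addr.
  have := dvdP3 hp h3 => hp3; subst p.
  case: d Ed {E hx ok} => [|d] Ed.
    have : c = 2 by apply: (pw_inj (p:=3)) => //; rewrite Ed.
    by move=> ->; right; left; split => //; left.
  exfalso.
  have E3 : 3 ^ 1 * (3 ^ d.+1 * 2 + 1) = 3 ^ c by rewrite Ed !expnS; ring.
  have := vuniq1 p1 E3 (nd_add1 p1 (dvdn_mulr _ (dvd_pw 3 (ltn0Sn _)))); case => _.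
  have := ppos d.+1 p1; lia.
case: d ok E had pD => [|d] ok E had pD; first by [].
have Ed : p ^ c = (p ^ a.+1 * p ^ d.+1 + p ^ a.+1 + p ^ d.+1) + 2 by rewrite -E.
have hx : p %| p ^ a.+1 * p ^ d.+1 + p ^ a.+1 + p ^ d.+1.
  by apply: dvdn_add; [apply: dvdn_add; [apply: dvdn_mulr|]|]; apply: dvd_pw.
have h2 : p %| 2 by move: dc; rewrite Ed dvdn_addr.
have := dvdP2 hp h2 => hp2; subst p.
case: a E Ed had pA {hx ok} => [|a] E Ed had pA.
  case: d E Ed had pD => [|d] E Ed _ _.
    exfalso; have E3 : 2 ^ 1 * 5 = 2 ^ c by rewrite Ed.
    by have := vuniq1 p1 E3 isT; case.
  case: d E Ed => [|d] E Ed.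
    have : c = 4 by apply: (pw_inj (p:=2)) => //; rewrite Ed.
    by move=> ->; right; right; split => //; left.
  exfalso.
  have E3 : 2 ^ 2 * (2 ^ d.+1 * 3 + 1) = 2 ^ c by rewrite Ed !expnS; ring.
  have := vuniq1 p1 E3 (nd_add1 p1 (dvdn_mulr _ (dvd_pw 2 (ltn0Sn _)))); case => _.
  have := ppos d.+1 p1; lia.
exfalso.
have hd : 0 < d by lia.
have E3 : 2 ^ 1 * ((2 ^ a.+1 * 2 ^ d.+1 + 2 ^ a.+1 + 2 ^ d) + 1) = 2 ^ c.
  by rewrite Ed !expnS; ring.
have hx : 2 %| 2 ^ a.+1 * 2 ^ d.+1 + 2 ^ a.+1 + 2 ^ d.
  by apply: dvdn_add; [apply: dvdn_add; [apply: dvdn_mull|]|]; apply: dvd_pw.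
have := vuniq1 p1 E3 (nd_add1 p1 hx); case => _.
have := ppos a.+1 p1; lia.
Qed.

Lemma ok4 p a b c d : exps_ok p [:: a; b; c; d] ->
  p = 2 -> [/\ 0 < a, 0 < b, 0 < c & 0 < d].
Proof. by move=> h /h /=; rewrite andbT => /and4P. Qed.
Lemma ok3 p a c d : exps_ok p [:: a; c; d] ->
  p = 2 -> [/\ 0 < a, 0 < c & 0 < d].
Proof. by move=> h /h /=; rewrite andbT => /and3P. Qed.


Local Open Scope ring_scope.

Lemma pwE (p e : nat) : pw p e = (p ^ e)%N%:R.
Proof. by rewrite /pw natrX. Qed.
Lemma pwD1 (p e : nat) : pw p e + 1 = (p ^ e + 1)%N%:R.
Proof. by rewrite pwE natrD. Qed.
Lemma pwB1 (p e : nat) : (0 < p)%N -> pw p e - 1 = (p ^ e - 1)%N%:R.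
Proof. by move=> h; rewrite pwE natrB // expn_gt0 h. Qed.

Lemma frac_eq (A B C D : nat) : (0 < B)%N -> (0 < D)%N ->
  (A%:R / B%:R = C%:R / D%:R :> rat) -> (A * D = C * B)%N.
Proof.
move=> hB hD /eqP; rewrite eqr_div ?pnatr_eq0 -?lt0n // -!natrM => /eqP.
by move/(congr1 (fun x : rat => x == ((C * B)%N)%:R)); rewrite eqxx eqr_nat => /eqP.
Qed.

Lemma frac_eq1 (A C D : nat) : (0 < D)%N ->
  (A%:R = C%:R / D%:R :> rat) -> (A * D = C)%N.
Proof.
move=> hD E; have := @frac_eq A 1 C D isT hD; rewrite muln1; apply.
by rewrite divr1.
Qed.

Lemma posint_frac (A B : nat) : (0 < B)%N -> posint (A%:R / B%:R) ->
  exists2 k, (0 < k)%N & (A = k * B)%N.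
Proof.
move=> hB [k [hk E]]; exists k => //.
have := @frac_eq A B k 1 hB isT; rewrite divr1 muln1 => h.
by rewrite h.
Qed.

Lemma posint_nat (A : nat) : posint (A%:R) -> (0 < A)%N.
Proof. by move=> [k [hk /eqP]]; rewrite eqr_nat => /eqP ->. Qed.

Unset Implicit Arguments.
Local Open Scope ring_scope.

Theorem mainTheorem11 (p : nat) (hp : prime p) :
  (* (1) *)
  (forall m n a b c d : nat, exps_ok p [:: a; b; c; d] ->
     let x := pw p m * (pw p a + 1) / (pw p b + 1) in
     x = pw p n * (pw p c + 1) / (pw p d + 1) -> posint x ->
     m = n /\ ((a = b /\ c = d) \/ (a = c /\ b = d))) /\
  (* (2) *)
  (forall m n a b c d : nat, exps_ok p [:: a; b; c; d] ->
     let x := pw p m * (pw p a - 1) / (pw p b + 1) in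
     x = pw p n * (pw p c - 1) / (pw p d + 1) -> posint x ->
     [/\ m = n, a = c & b = d]) /\
  (* (3) *)
  (forall m n a b c d : nat, exps_ok p [:: a; b; c; d] ->
     let x := pw p m * (pw p a + 1) / (pw p b + 1) in
     x = pw p n * (pw p c - 1) / (pw p d + 1) -> posint x ->
     m = n /\
     ((p = 2%N /\ ((a = b /\ c = 2%N /\ d = 1%N) \/ (a, b, c, d) = (3, 1, 4, 2)%N)) \/
      (p = 3%N /\ ((a = b /\ c = 1%N /\ d = 0%N) \/ (a, b, c, d) = (1, 0, 2, 1)%N)))) /\
  (* (4) *)
  (forall m n a c d : nat, exps_ok p [:: a; c; d] ->
     let x := pw p m * (pw p a + 1) in
     x = pw p n * (pw p c + 1) / (pw p d + 1) -> posint x ->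
     m = n /\
     ((p = 3%N /\ (a, c, d) = (0, 1, 0)%N) \/ (p = 2%N /\ (a, c, d) = (1, 3, 1)%N))) /\
  (* (5) *)
  (forall m n a c d : nat, exps_ok p [:: a; c; d] ->
     let x := pw p m * (pw p a + 1) in
     x = pw p n * (pw p c - 1) / (pw p d + 1) -> posint x ->
     m = n /\
     ((p = 5%N /\ (a, c, d) = (0, 1, 0)%N) \/
      (p = 3%N /\ ((a, c, d) = (0, 2, 1)%N \/ (a, c, d) = (1, 2, 0)%N)) \/
      (p = 2%N /\ ((a, c, d) = (1, 4, 2)%N \/ (a, c, d) = (2, 4, 1)%N)))).
Proof.
have p1 := pgt1 hp.
have p0 : (0 < p)%N by lia.
have pos1 : forall e, (0 < p ^ e + 1)%N by move=> e; lia.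
split; [|split; [|split; [|split]]].
- move=> m n a b c d ok x hx hpos; 
  have ea : p = 2%N -> (0 < a)%N by move/(ok4 ok)=> [].
  have eb : p = 2%N -> (0 < b)%N by move/(ok4 ok)=> [].
  have ec : p = 2%N -> (0 < c)%N by move/(ok4 ok)=> [].
  have ed : p = 2%N -> (0 < d)%N by move/(ok4 ok)=> [].
  rewrite /x !pwD1 !pwE -!natrM in hx hpos; clear x.
  have E := frac_eq (pos1 b) (pos1 d) hx.
  rewrite -!mulnA in E.
  have [hmn E2] := vuniq p1 E (nd2 hp (cop_plus hp ea) (cop_plus hp ed))
                              (nd2 hp (cop_plus hp ec) (cop_plus hp eb)).
  by split => //; apply: core1 hp E2.
- move=> m n a b c d ok x hx hpos.
  have ea : p = 2%N -> (0 < a)%N by move/(ok4 ok)=> [].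
  have eb : p = 2%N -> (0 < b)%N by move/(ok4 ok)=> [].
  have ec : p = 2%N -> (0 < c)%N by move/(ok4 ok)=> [].
  have ed : p = 2%N -> (0 < d)%N by move/(ok4 ok)=> [].
  rewrite /x !pwD1 !(pwB1 _ p0) !pwE -!natrM in hx hpos; clear x.
  have E := frac_eq (pos1 b) (pos1 d) hx.
  have [k hk Ek] := posint_frac (pos1 b) hpos.
  have pm := ppos m p1; have pn := ppos n p1.
  have pb := pos1 b; have pd := pos1 d.
  have ha : (0 < a)%N.
    case: a {ok ea hx hpos E} Ek => // Ek; rewrite expn0 subnn muln0 in Ek; nia.
  have pa : (0 < p ^ a - 1)%N.
    have := pw_ge p1 ha; lia.
  have hc : (0 < c)%N.
    case: c {ok ec hx hpos} E => // E; rewrite expn0 subnn muln0 mul0n in E; nia.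
  rewrite -!mulnA in E.
  have [hmn E2] := vuniq p1 E (nd2 hp (cop_minus p1 ha) (cop_plus hp ed))
                              (nd2 hp (cop_minus p1 hc) (cop_plus hp eb)).
  have Hd := intg hp (cop_plus hp eb) Ek.
  set q := ((p ^ a - 1) %/ (p ^ b + 1))%N.
  have Eq : (p ^ a - 1 = q * (p ^ b + 1))%N by rewrite divnK.
  have Hq1 : (q * (p ^ b + 1) + 1 = p ^ a)%N by rewrite -Eq subnK // ppos.
  have Hq2 : (q * (p ^ d + 1) + 1 = p ^ c)%N.
    have : (q * (p ^ d + 1) = p ^ c - 1)%N.
      apply/eqP; rewrite -(eqn_pmul2r pb) -E2 Eq; apply/eqP; ring.
    by move=> ->; rewrite subnK // ppos.
  by have [? ?] := core2 hp ha Hq1 Hq2.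
- move=> m n a b c d ok x hx hpos.
  have ea : p = 2%N -> (0 < a)%N by move/(ok4 ok)=> [].
  have eb : p = 2%N -> (0 < b)%N by move/(ok4 ok)=> [].
  have ec : p = 2%N -> (0 < c)%N by move/(ok4 ok)=> [].
  have ed : p = 2%N -> (0 < d)%N by move/(ok4 ok)=> [].
  rewrite /x !pwD1 !(pwB1 _ p0) !pwE -!natrM in hx hpos; clear x.
  have E := frac_eq (pos1 b) (pos1 d) hx.
  have [k hk Ek] := posint_frac (pos1 b) hpos.
  have pm := ppos m p1; have pn := ppos n p1.
  have pb := pos1 b; have pd := pos1 d; have pa := pos1 a.
  have hc : (0 < c)%N.
    case: c {ok ec hx hpos} E => // E; rewrite expn0 subnn muln0 mul0n in E; nia.
  rewrite -!mulnA in E.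
  have [hmn E2] := vuniq p1 E (nd2 hp (cop_plus hp ea) (cop_plus hp ed))
                              (nd2 hp (cop_minus p1 hc) (cop_plus hp eb)).
  have Hd := intg hp (cop_plus hp eb) Ek.
  set q := ((p ^ a + 1) %/ (p ^ b + 1))%N.
  have Eq : (p ^ a + 1 = q * (p ^ b + 1))%N by rewrite divnK.
  have Hq2 : (q * (p ^ d + 1) + 1 = p ^ c)%N.
    have : (q * (p ^ d + 1) = p ^ c - 1)%N.
      apply/eqP; rewrite -(eqn_pmul2r pb) -E2 Eq; apply/eqP; ring.
    by move=> ->; rewrite subnK // ppos.
  by split => //; apply: core3 (ok4 ok) (esym Eq) Hq2.
- move=> m n a c d ok x hx hpos.
  have ea : p = 2%N -> (0 < a)%N by move/(ok3 ok)=> [].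
  have ec : p = 2%N -> (0 < c)%N by move/(ok3 ok)=> [].
  have ed : p = 2%N -> (0 < d)%N by move/(ok3 ok)=> [].
  rewrite /x !pwD1 !pwE -!natrM in hx hpos; clear x.
  have E := frac_eq1 (pos1 d) hx.
  rewrite -!mulnA in E.
  have [hmn E2] := vuniq p1 E (nd2 hp (cop_plus hp ea) (cop_plus hp ed))
                              (cop_plus hp ec).
  by split => //; apply: core4 (ok3 ok) E2.
- move=> m n a c d ok x hx hpos.
  have ea : p = 2%N -> (0 < a)%N by move/(ok3 ok)=> [].
  have ec : p = 2%N -> (0 < c)%N by move/(ok3 ok)=> [].
  have ed : p = 2%N -> (0 < d)%N by move/(ok3 ok)=> [].
  rewrite /x !pwD1 !(pwB1 _ p0) !pwE -!natrM in hx hpos; clear x.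
  have E := frac_eq1 (pos1 d) hx.
  have pm := ppos m p1; have pn := ppos n p1.
  have pd := pos1 d; have pa := pos1 a.
  have hc : (0 < c)%N.
    case: c {ok ec hx hpos} E => // E; rewrite expn0 subnn muln0 in E; nia.
  rewrite -!mulnA in E.
  have [hmn E2] := vuniq p1 E (nd2 hp (cop_plus hp ea) (cop_plus hp ed))
                              (cop_minus p1 hc).
  have E3 : ((p ^ a + 1) * (p ^ d + 1) + 1 = p ^ c)%N by rewrite E2 subnK // ppos.
  by split => //; apply: core5 (ok3 ok) E3.
Qed.
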